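(* Let $(X,d)$ be a length space and $\Gamma$ a group acting properly by isometries on $X$ such that $\Gamma\backslash X$ is compact with diameter at most $D$. Suppose there exist $x_0\in X$, $C_0>1$ and $R_0>D$ such that for every $r\in[R_0/2,2R_0]$ one has $0<\mu_{x_0}^\Gamma(B(x_0,r))<\infty$ and $\mu_{x_0}^\Gamma(B(x_0,2r))\le C_0\,\mu_{x_0}^\Gamma(B(x_0,r))$. Then: (i) for every $R_1\ge R_0$ and every $r\in[R_1/2,2R_1]$, $\mu_{x_0}^\Gamma(B(x_0,2r))\le C_0^{3(1+[2R_1/R_0])}\mu_{x_0}^\Gamma(B(x_0,r))$; (ii) $\operatorname{Ent}(X,d)\le\frac{3}{R_0}\ln C_0$.
   Context: A length space: any two points are joined by a continuous path and $d$ is the infimum of lengths of such paths. Proper action: $\{\gamma:d(x,\gamma x)\le R\}$ finite. $\mu_{x_0}^\Gamma=\sum_{\gamma\in\Gamma}\delta_{\gamma x_0}$ is the counting measure of the orbit, so $\mu_{x_0}^\Gamma(B(x_0,r))=\#\{\gamma: d(x_0,\gamma x_0)<r\}$; $B(x,r)$ is the open ball. Quotient distance $\bar d(\Gamma x,\Gamma y)=\inf_\gamma d(x,\gamma y)$. $\operatorname{Ent}(X,d)=\liminf_R\frac1R\ln\mu_{x_0}^\Gamma(B(x_0,R))$. $[t]$ is the integer part. *)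

(* Defs.v *)
From Stdlib Require Import Reals Lra ZArith List ClassicalEpsilon.
Open Scope R_scope.

Record IsMetric {X : Type} (d : X -> X -> R) : Prop := {
  metric_eq0 : forall x y, d x y = 0 <-> x = y;
  metric_sym : forall x y, d x y = d y x;
  metric_tri : forall x y z, d x z <= d x y + d y z
}.

Fixpoint psum (f : nat -> R) (n : nat) : R :=
  match n with O => 0 | S k => psum f k + f k end.

Definition path_continuous {X : Type} (d : X -> X -> R) (c : R -> X) : Prop :=
  forall t, 0 <= t <= 1 -> forall eps, eps > 0 ->
    exists delta, delta > 0 /\
      forall s, 0 <= s <= 1 -> Rabs (s - t) < delta -> d (c s) (c t) < eps.

(* length(c) <= L, where length = sup over partitions 0 = t_0 <= ... <= t_n = 1
   of sum_i d(c t_i, c t_{i+1}). *)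
Definition path_length_le {X : Type} (d : X -> X -> R) (c : R -> X) (L : R) : Prop :=
  forall (t : nat -> R) (n : nat),
    t O = 0 -> t n = 1 -> (forall i, (i < n)%nat -> t i <= t (S i)) ->
    psum (fun i => d (c (t i)) (c (t (S i)))) n <= L.

(* Length space: any two points are joined by a continuous path and d is the
   infimum of the lengths of such paths (d <= length always holds by the
   triangle inequality, so only the "inf <= d" half needs stating). *)
Definition LengthSpace {X : Type} (d : X -> X -> R) : Prop :=
  IsMetric d /\
  forall x y : X,
    (exists c, path_continuous d c /\ c 0 = x /\ c 1 = y) /\
    (forall eps, eps > 0 ->
      exists c, path_continuous d c /\ c 0 = x /\ c 1 = y /\
                path_length_le d c (d x y + eps)).

Record IsometricGroupAction {G X : Type} (mul : G -> G -> G) (inv : G -> G)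
    (e : G) (act : G -> X -> X) (d : X -> X -> R) : Prop := {
  grp_assoc : forall a b c, mul a (mul b c) = mul (mul a b) c;
  grp_idl : forall a, mul e a = a;
  grp_idr : forall a, mul a e = a;
  grp_invl : forall a, mul (inv a) a = e;
  grp_invr : forall a, mul a (inv a) = e;
  act_id : forall x, act e x = x;
  act_mul : forall a b x, act (mul a b) x = act a (act b x);
  act_isom : forall a x y, d (act a x) (act a y) = d x y
}.

Definition ProperAction {G X : Type} (act : G -> X -> X) (d : X -> X -> R) : Prop :=
  forall (x : X) (Rr : R), exists l : list G,
    forall g, d x (act g x) <= Rr -> In g l.

(* Quotient distance dbar(Gx, Gy) = inf_g d(x, g y).
   dbar(Gx,Gy) < eps  <->  exists g, d(x, g y) < eps. *)
Definition QuotientDiamLe {G X : Type} (act : G -> X -> X) (d : X -> X -> R) (D : R) : Prop :=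
  forall x y : X, forall eps, eps > 0 -> exists g, d x (act g y) <= D + eps.

(* Compactness of the quotient metric space (Gamma\X, dbar), stated as
   sequential compactness: every sequence of orbits has a subsequence
   converging in dbar. *)
Definition QuotientCompact {G X : Type} (act : G -> X -> X) (d : X -> X -> R) : Prop :=
  forall u : nat -> X, exists (y : X) (phi : nat -> nat),
    (forall n, (phi n < phi (S n))%nat) /\
    forall eps, eps > 0 -> exists N, forall n, (n >= N)%nat ->
      exists g, d (u (phi n)) (act g y) < eps.

Definition HasCard {G : Type} (P : G -> Prop) (n : nat) : Prop :=
  exists l : list G, NoDup l /\ length l = n /\ forall g, In g l <-> P g.

(* mu_{x0}^Gamma(B(x0,r)) = #{g | d(x0, g x0) < r}  (the cardinality when this
   set is finite, which is always the case for a proper action). *)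
Definition orbit_ball_count {G X : Type} (act : G -> X -> X) (d : X -> X -> R)
    (x0 : X) (r : R) : nat :=
  epsilon (inhabits O) (fun n => HasCard (fun g => d x0 (act g x0) < r) n).

Definition orbit_ball_finite {G X : Type} (act : G -> X -> X) (d : X -> X -> R)
    (x0 : X) (r : R) : Prop :=
  exists n, HasCard (fun g => d x0 (act g x0) < r) n.

(* liminf_{R -> +oo} f R <= L  (literal unfolding of sup_M inf_{R>M} f R <= L). *)
Definition liminf_infty_le (f : R -> R) (L : R) : Prop :=
  forall eps, eps > 0 -> forall M, exists Rr, Rr > M /\ f Rr <= L + eps.

Definition Ent_le {G X : Type} (act : G -> X -> X) (d : X -> X -> R) (x0 : X) (L : R) : Prop :=
  liminf_infty_le (fun Rr => / Rr * ln (INR (orbit_ball_count act d x0 Rr))) L.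

(* Main.v *)
Require Import Defs.
From Stdlib Require Import Reals ZArith Lra List FinFun ClassicalEpsilon Lia.
Open Scope R_scope.

Section S.
Context {X G : Type} (d : X -> X -> R)
  (mul : G -> G -> G) (inv : G -> G) (e : G) (act : G -> X -> X)
  (D : R) (x0 : X).
Hypothesis HM : IsMetric d.
Hypothesis HG : IsometricGroupAction mul inv e act d.
Hypothesis HP : ProperAction act d.

Let nrm g := d x0 (act g x0).

Lemma d_refl x : d x x = 0.
Proof. apply (metric_eq0 _ HM). reflexivity. Qed.

Lemma d_pos x y : 0 <= d x y.
Proof.
  pose proof (metric_tri _ HM x y x). rewrite d_refl, (metric_sym _ HM y x) in H. lra.
Qed.

Lemma nrm_e : nrm e = 0.
Proof. unfold nrm. rewrite (act_id _ _ _ _ _ HG). apply d_refl. Qed.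

Lemma nrm_mul g h : nrm (mul g h) <= nrm g + nrm h.
Proof.
  unfold nrm. rewrite (act_mul _ _ _ _ _ HG).
  eapply Rle_trans. apply (metric_tri _ HM x0 (act g x0)).
  rewrite (act_isom _ _ _ _ _ HG). lra.
Qed.

Lemma nrm_inv g : nrm (inv g) = nrm g.
Proof.
  unfold nrm. rewrite <- (act_isom _ _ _ _ _ HG g x0 (act (inv g) x0)).
  rewrite <- (act_mul _ _ _ _ _ HG), (grp_invr _ _ _ _ _ HG), (act_id _ _ _ _ _ HG).
  apply (metric_sym _ HM).
Qed.

Lemma mul_cancel a x y : mul a x = mul a y -> x = y.
Proof.
  intro H.
  rewrite <- (grp_idl _ _ _ _ _ HG x), <- (grp_idl _ _ _ _ _ HG y).
  rewrite <- (grp_invl _ _ _ _ _ HG a), <- !(grp_assoc _ _ _ _ _ HG), H. reflexivity.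
Qed.

Definition ballP r := fun g => nrm g < r.

Lemma ball_fin r : exists n, HasCard (ballP r) n.
Proof.
  destruct (HP x0 r) as [l Hl].
  set (l1 := filter (fun g => if Rlt_dec (nrm g) r then true else false) l).
  set (l2 := nodup (fun a b => excluded_middle_informative (a = b)) l1).
  exists (length l2). exists l2. split; [apply NoDup_nodup|]. split; [reflexivity|].
  intro g. unfold l2. rewrite nodup_In. unfold l1. rewrite filter_In. unfold ballP.
  destruct (Rlt_dec (nrm g) r) as [Hr|Hr]; split.
  - intros; assumption.
  - intros; split; auto. apply Hl. unfold nrm in Hr; lra.
  - intros [_ Hf]; discriminate.
  - intro; contradiction.
Qed.

Lemma card_le (P Q : G -> Prop) n m :
  (forall g, P g -> Q g) -> HasCard P n -> HasCard Q m -> (n <= m)%nat.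
Proof.
  intros HPQ [l [Hl1 [Hl2 Hl3]]] [l' [Hl'1 [Hl'2 Hl'3]]].
  subst. apply NoDup_incl_length; auto.
  intros g Hg. apply Hl'3, HPQ, Hl3, Hg.
Qed.

Let N r := orbit_ball_count act d x0 r.

Lemma N_spec r : HasCard (ballP r) (N r).
Proof.
  unfold N, orbit_ball_count. apply epsilon_spec. apply ball_fin.
Qed.

Lemma N_mono r r' : r <= r' -> (N r <= N r')%nat.
Proof.
  intro. apply (card_le (ballP r) (ballP r')); try apply N_spec.
  unfold ballP; intros; lra.
Qed.

Lemma N_pos r : 0 < r -> (1 <= N r)%nat.
Proof.
  intro. destruct (N_spec r) as [l [_ [Hlen Hin]]].
  assert (In e l) by (apply Hin; unfold ballP; rewrite nrm_e; auto).
  destruct l; [contradiction|]. simpl in Hlen. lia.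
Qed.

Lemma NoDup_prod {A B : Type} (l : list A) (l' : list B) :
  NoDup l -> NoDup l' -> NoDup (list_prod l l').
Proof.
  intros H1 H2. induction H1 as [|a l Ha Hl IH]; simpl; [constructor|].
  apply NoDup_app; auto.
  - apply Injective_map_NoDup; auto. intros y y' Hy; injection Hy; auto.
  - intros [x y] Hin Hin2. apply in_map_iff in Hin as [z [Hz _]]. injection Hz as <- _.
    apply in_prod_iff in Hin2 as [Hx _]. contradiction.
Qed.

Lemma ruzsa a q s rho :
  (forall w, nrm w < a -> exists g h, w = mul g h /\ nrm g < q /\ nrm h < s) ->
  (N rho * N a <= N (q + rho) * N (s + rho))%nat.
Proof.
  intro Hdec.
  set (gw := fun w => epsilon (inhabits e)
      (fun g => exists h, w = mul g h /\ nrm g < q /\ nrm h < s)).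
  set (hw := fun w => mul (inv (gw w)) w).
  set (F := fun p : G * G => (mul (gw (snd p)) (fst p), mul (inv (fst p)) (hw (snd p)))).
  destruct (N_spec rho) as [l1 [N1 [L1 I1]]].
  destruct (N_spec a) as [l2 [N2 [L2 I2]]].
  destruct (N_spec (q + rho)) as [l3 [N3 [L3 I3]]].
  destruct (N_spec (s + rho)) as [l4 [N4 [L4 I4]]].
  rewrite <- L1, <- L2, <- L3, <- L4, <- !length_prod.
  assert (prodF : forall p, mul (fst (F p)) (snd (F p)) = snd p).
  { intros [x w]. unfold F, hw; simpl.
    rewrite <- (grp_assoc _ _ _ _ _ HG), (grp_assoc _ _ _ _ _ HG x).
    rewrite (grp_invr _ _ _ _ _ HG), (grp_idl _ _ _ _ _ HG).
    rewrite (grp_assoc _ _ _ _ _ HG), (grp_invr _ _ _ _ _ HG), (grp_idl _ _ _ _ _ HG).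
    reflexivity. }
  rewrite <- (length_map F).
  apply NoDup_incl_length.
  - apply Injective_map_NoDup.
    + intros [x w] [x' w'] Heq.
      assert (w = w') as <-.
      { pose proof (prodF (x, w)) as A1. pose proof (prodF (x', w')) as A2.
        rewrite Heq in A1. simpl in *. congruence. }
      unfold F in Heq; simpl in Heq. injection Heq as H1 _.
      apply mul_cancel in H1. subst; reflexivity.
    + apply NoDup_prod; auto.
  - intros [y z] Hyz. apply in_map_iff in Hyz as [[x w] [HF Hin]].
    apply in_prod_iff in Hin as [Hx Hw].
    apply I1 in Hx. apply I2 in Hw. unfold ballP in *.
    assert (Hs := Hdec w Hw).
    assert (Hgw : exists h, w = mul (gw w) h /\ nrm (gw w) < q /\ nrm h < s)
      by (apply epsilon_spec; destruct Hs as [g [h Hh]]; eauto).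
    destruct Hgw as [h [Hw1 [Hg Hh]]].
    assert (hw w = h).
    { unfold hw. rewrite Hw1 at 2. rewrite (grp_assoc _ _ _ _ _ HG), (grp_invl _ _ _ _ _ HG), (grp_idl _ _ _ _ _ HG). reflexivity. }
    unfold F in HF; simpl in HF. injection HF as <- <-.
    apply in_prod; [apply I3 | apply I4]; unfold ballP.
    + pose proof (nrm_mul (gw w) x). lra.
    + rewrite H. pose proof (nrm_mul (inv x) h). rewrite nrm_inv in H0. lra.
Qed.


Lemma clamp_lip u a : Rabs (Rmax 0 (Rmin 1 u) - Rmax 0 (Rmin 1 a)) <= Rabs (u - a).
Proof.
  unfold Rmax, Rmin; repeat destruct Rle_dec; unfold Rabs; repeat destruct Rcase_abs; lra.
Qed.

Lemma clamp_in u : 0 <= Rmax 0 (Rmin 1 u) <= 1.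
Proof. unfold Rmax, Rmin; repeat destruct Rle_dec; lra. Qed.

Lemma clamp_id u : 0 <= u <= 1 -> Rmax 0 (Rmin 1 u) = u.
Proof. intro. unfold Rmax, Rmin; repeat destruct Rle_dec; lra. Qed.

Lemma cont_clamp (c : R -> X) y t : path_continuous d c ->
  continuity (fun u => d y (c (Rmax 0 (Rmin 1 u))) - t).
Proof.
  intros Hc a. unfold continuity_pt, continue_in, limit1_in, limit_in.
  intros eps Heps. simpl. unfold R_dist.
  destruct (Hc (Rmax 0 (Rmin 1 a)) (clamp_in a) eps Heps) as [del [Hdel Hd]].
  exists del. split; auto. intros u [_ Hu].
  specialize (Hd (Rmax 0 (Rmin 1 u)) (clamp_in u)).
  assert (Hlt : d (c (Rmax 0 (Rmin 1 u))) (c (Rmax 0 (Rmin 1 a))) < eps).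
  { apply Hd. eapply Rle_lt_trans; [apply clamp_lip|]. exact Hu. }
  pose proof (metric_tri _ HM y (c (Rmax 0 (Rmin 1 a))) (c (Rmax 0 (Rmin 1 u)))).
  pose proof (metric_tri _ HM y (c (Rmax 0 (Rmin 1 u))) (c (Rmax 0 (Rmin 1 a)))).
  rewrite (metric_sym _ HM (c (Rmax 0 (Rmin 1 a)))) in H.
  unfold Rabs; destruct Rcase_abs; lra.
Qed.

Lemma pivot q s g0 : LengthSpace d -> QuotientDiamLe act d D ->
  0 < s -> D < q -> nrm g0 + 2 * D < q + s ->
  exists g h, g0 = mul g h /\ nrm g < q /\ nrm h < s.
Proof.
  intros [_ HLS] HQ Hs Hq Hsum.
  set (L := nrm g0).
  destruct (Rlt_dec L q) as [HLq|HLq].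
  { exists g0, e. rewrite (grp_idr _ _ _ _ _ HG), nrm_e. auto. }
  apply Rnot_lt_le in HLq.
  set (del := Rmin ((q + s - 2 * D - L) / 4) ((q - D) / 2)).
  assert (HsumL : L + 2 * D < q + s) by (unfold L; exact Hsum).
  assert (Hdel : 0 < del) by (unfold del, Rmin; destruct Rle_dec; lra).
  assert (Hdel1 : del <= (q + s - 2 * D - L) / 4) by apply Rmin_l.
  assert (Hdel2 : del <= (q - D) / 2) by apply Rmin_r.
  set (t := q - D - del).
  destruct (HLS x0 (act g0 x0)) as [_ Hp].
  destruct (Hp del Hdel) as [c [Hc [Hc0 [Hc1 Hlen]]]].
  destruct (IVT (fun u => d x0 (c (Rmax 0 (Rmin 1 u))) - t) 0 1) as [z [Hz Hfz]].
  - apply cont_clamp; auto.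
  - lra.
  - rewrite clamp_id by lra. rewrite Hc0, d_refl. unfold t; lra.
  - rewrite clamp_id by lra. rewrite Hc1. fold (nrm g0). fold L. destruct (HQ x0 x0 (del/2)) as [gg Hgg]; [lra|].
    pose proof (d_pos x0 (act gg x0)). unfold t; lra.
  - rewrite clamp_id in Hfz by lra.
    set (p := c z).
    assert (Hpt : d x0 p = t) by (unfold p; lra).
    assert (Hpg : d x0 p + d p (act g0 x0) <= L + del).
    { specialize (Hlen (fun i => match i with O => 0 | 1%nat => z | _ => 1 end) 2%nat
        eq_refl eq_refl).
      simpl in Hlen. rewrite Hc0, Hc1 in Hlen. unfold p. fold (nrm g0) in Hlen. fold L in Hlen.
      assert (0 <= 0 + d x0 (c z) + d (c z) (act g0 x0) - (d x0 (c z) + d (c z) (act g0 x0))) by lra.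
      apply Rle_trans with (0 + d x0 (c z) + d (c z) (act g0 x0)); [lra|].
      apply Hlen. intros i Hi. destruct i as [|[|]]; simpl; lra || lia. }
    destruct (HQ p x0 (del / 2)) as [g Hg]; [lra|].
    exists g, (mul (inv g) g0). split; [|split].
    + rewrite (grp_assoc _ _ _ _ _ HG), (grp_invr _ _ _ _ _ HG), (grp_idl _ _ _ _ _ HG); reflexivity.
    + unfold nrm. unfold t in Hpt. pose proof (metric_tri _ HM x0 p (act g x0)). lra.
    + unfold nrm. rewrite <- (act_isom _ _ _ _ _ HG g), <- (act_mul _ _ _ _ _ HG),
        (grp_assoc _ _ _ _ _ HG), (grp_invr _ _ _ _ _ HG), (grp_idl _ _ _ _ _ HG).
      pose proof (metric_tri _ HM (act g x0) p (act g0 x0)).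
      rewrite (metric_sym _ HM (act g x0) p) in H. unfold t in Hpt. lra.
Qed.

Lemma D_nonneg : QuotientDiamLe act d D -> 0 <= D.
Proof.
  intro HQ. apply Rnot_lt_le. intro HD.
  destruct (HQ x0 x0 (- D / 2)) as [g Hg]; [lra|].
  pose proof (d_pos x0 (act g x0)). lra.
Qed.

Section Main.
Variables (C0 R0 : R).
Hypothesis HL : LengthSpace d.
Hypothesis HQ : QuotientDiamLe act d D.
Hypothesis HC0 : C0 > 1.
Hypothesis HR0 : R0 > D.
Hypothesis Hdb : forall r, R0 / 2 <= r <= 2 * R0 ->
     orbit_ball_finite act d x0 r /\
     0 < INR (orbit_ball_count act d x0 r) /\
     orbit_ball_finite act d x0 (2 * r) /\
     INR (orbit_ball_count act d x0 (2 * r))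
       <= C0 * INR (orbit_ball_count act d x0 r).

Lemma R0pos : 0 < R0.
Proof. pose proof (D_nonneg HQ). lra. Qed.

Lemma NposR r : 0 < r -> 1 <= INR (N r).
Proof. intro. apply (le_INR 1). apply N_pos; auto. Qed.

Lemma N4 : INR (N (4 * R0)) <= C0 ^ 3 * INR (N (R0 / 2)).
Proof.
  pose proof R0pos.
  destruct (Hdb (R0/2)) as [_ [_ [_ H1]]]; [lra|].
  destruct (Hdb R0) as [_ [_ [_ H2]]]; [lra|].
  destruct (Hdb (2 * R0)) as [_ [_ [_ H3]]]; [lra|].
  replace (2 * (R0 / 2)) with R0 in H1 by field.
  replace (2 * (2 * R0)) with (4 * R0) in H3 by ring.
  fold (N R0) (N (R0/2)) (N (2*R0)) (N (4 * R0)) in *.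
  pose proof (pos_INR (N (R0/2))). pose proof (pos_INR (N R0)).
  simpl. nra.
Qed.

Lemma step r : r >= R0 / 2 -> INR (N (r + R0)) <= C0 ^ 3 * INR (N r).
Proof.
  intro Hr. pose proof R0pos. pose proof N4. pose proof (D_nonneg HQ).
  assert (HC3 : 1 <= C0 ^ 3) by (simpl; nra).
  destruct (Rle_lt_dec r (R0 / 2)) as [Hle|Hne].
  - apply Rle_trans with (INR (N (4 * R0))).
    { apply le_INR, N_mono. lra. }
    eapply Rle_trans; [exact H0|]. apply Rmult_le_compat_l; [lra|].
    apply le_INR, N_mono. lra.
  - assert (Hru : (N (R0/2) * N (r + R0) <= N (7 * R0 / 2 + R0 / 2) * N (r - R0/2 + R0/2))%nat).
    { apply ruzsa. intros w Hw. apply pivot; auto.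
      - lra.
      - lra.
      - lra.
      }
    replace (7 * R0 / 2 + R0 / 2) with (4 * R0) in Hru by field.
    replace (r - R0 / 2 + R0 / 2) with r in Hru by field.
    apply le_INR in Hru. rewrite !mult_INR in Hru.
    pose proof (NposR (R0/2) ltac:(lra)).
    pose proof (pos_INR (N r)).
    apply Rmult_le_reg_l with (INR (N (R0 / 2))); [lra|].
    eapply Rle_trans; [exact Hru|].
    assert (INR (N (4 * R0)) * INR (N r) <= C0 ^ 3 * INR (N (R0 / 2)) * INR (N r))
      by (apply Rmult_le_compat_r; auto).
    lra.
Qed.

Lemma iter_step n r : r >= R0 / 2 ->
  INR (N (r + INR n * R0)) <= C0 ^ (3 * n) * INR (N r).
Proof.
  intro Hr. pose proof R0pos. induction n.
  - simpl. rewrite Rmult_0_l, Rplus_0_r. lra.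
  - rewrite S_INR. replace (r + (INR n + 1) * R0) with ((r + INR n * R0) + R0) by ring.
    eapply Rle_trans. apply step. pose proof (pos_INR n). nra.
    replace (3 * S n)%nat with (3 + 3 * n)%nat by lia. rewrite pow_add.
    assert (0 <= C0 ^ 3) by (apply pow_le; lra).
    rewrite Rmult_assoc. apply Rmult_le_compat_l; auto.
Qed.

End Main.
End S.

Theorem lemma3p9 (X G : Type) (d : X -> X -> R)
  (mul : G -> G -> G) (inv : G -> G) (e : G) (act : G -> X -> X)
  (D : R) (x0 : X) (C0 R0 : R) :
  LengthSpace d ->
  IsometricGroupAction mul inv e act d ->
  ProperAction act d ->
  QuotientCompact act d ->
  QuotientDiamLe act d D ->
  C0 > 1 -> R0 > D ->
  (forall r, R0 / 2 <= r <= 2 * R0 ->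
     orbit_ball_finite act d x0 r /\
     0 < INR (orbit_ball_count act d x0 r) /\
     orbit_ball_finite act d x0 (2 * r) /\
     INR (orbit_ball_count act d x0 (2 * r))
       <= C0 * INR (orbit_ball_count act d x0 r)) ->
  (forall R1, R1 >= R0 -> forall r, R1 / 2 <= r <= 2 * R1 ->
     INR (orbit_ball_count act d x0 (2 * r))
       <= C0 ^ (3 * (1 + Z.to_nat (Int_part (2 * R1 / R0))))
          * INR (orbit_ball_count act d x0 r))
  /\ Ent_le act d x0 (3 / R0 * ln C0).
Proof.
  intros HL HG HP _ HQ HC0 HR0 Hdb.
  assert (HM : IsMetric d) by (destruct HL; auto).
  pose proof (R0pos d act D x0 HM R0 HQ HR0) as HR0p.
  pose proof (D_nonneg d act D x0 HM HQ) as HD0.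
  split.
  - intros R1 HR1 r Hr.
    set (z := Int_part (2 * R1 / R0)).
    assert (Hz := base_Int_part (2 * R1 / R0)). fold z in Hz.
    assert (H2 : 2 <= 2 * R1 / R0).
    { apply Rmult_le_reg_r with R0; auto. unfold Rdiv. rewrite Rmult_assoc, Rinv_l by lra. lra. }
    assert (Hz0 : (0 <= z)%Z) by (apply le_IZR; simpl; lra).
    assert (HINR : INR (1 + Z.to_nat z) = 1 + IZR z).
    { rewrite plus_INR, (INR_IZR_INZ (Z.to_nat z)), Z2Nat.id by auto. simpl. ring. }
    eapply Rle_trans; [| apply (iter_step d mul inv e act D x0 HM HG HP C0 R0 HL HQ HC0 HR0 Hdb); lra].
    apply le_INR, N_mono; auto.
    rewrite HINR.
    assert (2 * R1 < (1 + IZR z) * R0).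
    { assert (2 * R1 / R0 < 1 + IZR z) by lra.
      apply Rmult_lt_compat_r with (r := R0) in H; auto.
      unfold Rdiv in H. rewrite Rmult_assoc, Rinv_l, Rmult_1_r in H by lra. lra. }
    lra.
  - intros eps Heps M.
    set (K := ln (INR (orbit_ball_count act d x0 (R0 / 2)))).
    assert (HN1 := NposR d mul inv e act x0 HM HG HP (R0/2) ltac:(lra)).
    assert (HK : 0 <= K).
    { unfold K. destruct (Rle_lt_or_eq_dec 1 _ HN1) as [Hl|He].
      - rewrite <- ln_1. left. apply ln_increasing; lra.
      - rewrite <- He, ln_1. lra. }
    destruct (INR_unbounded (Rmax (Rmax (M / R0) (K / (eps * R0))) 1)) as [n Hn].
    assert (Hn1 : INR n > M / R0) by (pose proof (Rmax_l (M/R0) (K/(eps*R0))); pose proof (Rmax_l (Rmax (M / R0) (K / (eps * R0))) 1); lra).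
    assert (Hn2 : INR n > K / (eps * R0)) by (pose proof (Rmax_r (M/R0) (K/(eps*R0))); pose proof (Rmax_l (Rmax (M / R0) (K / (eps * R0))) 1); lra).
    assert (Hn3 : INR n > 1) by (pose proof (Rmax_r (Rmax (M / R0) (K / (eps * R0))) 1); lra).
    set (Rr := R0 / 2 + INR n * R0).
    exists Rr.
    assert (HnM : INR n * R0 > M).
    { apply Rmult_gt_compat_r with (r := R0) in Hn1; auto.
      unfold Rdiv in Hn1. rewrite Rmult_assoc, Rinv_l, Rmult_1_r in Hn1 by lra. lra. }
    assert (HnK : INR n * (eps * R0) > K).
    { apply Rmult_gt_compat_r with (r := eps * R0) in Hn2; [|nra].
      unfold Rdiv in Hn2. rewrite Rmult_assoc, Rinv_l, Rmult_1_r in Hn2 by nra. lra. }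
    split; [unfold Rr; lra|].
    assert (Hit := iter_step d mul inv e act D x0 HM HG HP C0 R0 HL HQ HC0 HR0 Hdb n (R0/2) ltac:(lra)).
    fold Rr in Hit.
    set (a := ln C0).
    assert (Ha : 0 < a) by (unfold a; rewrite <- ln_1; apply ln_increasing; lra).
    assert (HNr := NposR d mul inv e act x0 HM HG HP Rr ltac:(unfold Rr; pose proof (pos_INR n); nra)).
    assert (Hln : ln (INR (orbit_ball_count act d x0 Rr)) <= INR (3 * n) * a + K).
    { unfold a, K. rewrite <- ln_pow by lra. rewrite <- ln_mult; [| apply pow_lt; lra | lra].
      destruct (Rle_lt_or_eq_dec _ _ Hit) as [Hl|He].
      - left. apply ln_increasing; lra.
      - rewrite He. lra. }
    assert (HRr : 0 < Rr) by (unfold Rr; pose proof (pos_INR n); nra).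
    apply Rle_trans with (/ Rr * (INR (3 * n) * a + K)).
    { apply Rmult_le_compat_l; auto. left. apply Rinv_0_lt_compat; auto. }
    apply Rle_trans with (/ Rr * (Rr * (3 / R0 * a + eps))).
    { apply Rmult_le_compat_l; [left; apply Rinv_0_lt_compat; auto|].
      rewrite mult_INR.
      assert (Rr * (3 / R0 * a + eps) = 3 * a / 2 + 3 * INR n * a + Rr * eps)
        by (unfold Rr; field; lra).
      rewrite H. assert (Rr * eps >= INR n * (eps * R0)) by (unfold Rr; nra).
      simpl INR. lra. }
    right. field. lra.
Qed.
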